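(* Let $F$ be a safe sentence and let $\mathbf c$ be a nonempty finite set of object constants containing every object constant occurring in $F$. Then $\mathrm{SM}[\mathrm{Ground}_{\mathbf c}[F]]$ is equivalent to $\mathrm{SM}[F]$ (they are satisfied by the same interpretations).
   Context: Formulas are first-order formulas over a signature with object constants, predicate constants and equality, but no function constants of arity $>0$. Primitive connectives are $\bot,\land,\lor,\rightarrow$, quantifiers $\forall,\exists$; $\neg G$ is $G\rightarrow\bot$, $\top$ is $\bot\rightarrow\bot$, $G\leftrightarrow H$ is $(G\rightarrow H)\land(H\rightarrow G)$. A sentence is a formula without free variables. Stable model operator: for a sentence $F$, let $\mathbf p=p_1,\dots,p_n$ be all predicate constants occurring in $F$ and $\mathbf u=u_1,\dots,u_n$ distinct predicate variables with matching arities. $\mathbf u\le\mathbf p$ is $\bigwedge_i\forall\mathbf x(u_i(\mathbf x)\rightarrow p_i(\mathbf x))$, $\mathbf u=\mathbf p$ is $\bigwedge_i\forall\mathbf x(u_i(\mathbf x)\leftrightarrow p_i(\mathbf x))$, $\mathbf u<\mathbf p$ is $(\mathbf u\le\mathbf p)\land\neg(\mathbf u=\mathbf p)$. $F^*(\mathbf u)$: $p_i(\mathbf t)^*=u_i(\mathbf t)$; $(t_1=t_2)^*=(t_1=t_2)$; $\bot^*=\bot$; $(G\land H)^*=G^*\land H^*$; $(G\lor H)^*=G^*\lor H^*$; $(G\rightarrow H)^*=(G^*\rightarrow H^* )\land(G\rightarrow H)$; $(\forall xG)^*=\forall xG^*$; $(\exists xG)^*=\exists xG^*$. $\mathrm{SM}[F]$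 is $F\land\neg\exists\mathbf u((\mathbf u<\mathbf p)\land F^*(\mathbf u))$. Restricted variables: for quantifier-free $G$, $\mathrm{RV}(G)$ is: $\emptyset$ if $G$ is an equality between two variables; the set of variables of $G$ if $G$ is any other atomic formula; $\mathrm{RV}(\bot)=\emptyset$; $\mathrm{RV}(G\land H)=\mathrm{RV}(G)\cup\mathrm{RV}(H)$; $\mathrm{RV}(G\lor H)=\mathrm{RV}(G)\cap\mathrm{RV}(H)$; $\mathrm{RV}(G\rightarrow H)=\emptyset$. An occurrence of a subformula or variable is positive if the number of implications containing it in their antecedent is even, negative otherwise, and strictly positive if it is in the antecedent of no implication. A prenex sentence $Q_1x_1\cdots Q_nx_nM$ ($M$ quantifier-free, $x_i$ distinct) is semi-safe if every strictly positive occurrence of every $x_i$ in $M$ belongs to a subformula $G\rightarrow H$ with $x_i\in\mathrm{RV}(G)$. Simplification transformations: $\neg\bot\mapsto\top$, $\neg\top\mapsto\bot$; $\bot\land G\mapsto\bot$, $G\land\bot\mapsto\bot$, $\top\land G\mapsto G$, $G\land\top\mapsto G$; $\bot\lor G\mapsto G$, $G\lor\bot\mapsto G$, $\top\lor G\mapsto\top$, $G\lor\top\mapsto\top$; $\bot\rightarrow G\mapsto\top$, $G\rightarrow\top\mapsto\top$, $\top\rightarrow G\mapsto G$. A variable $x$ is positively (resp. negatively) weakly restricted in a quantifier-free formula $G$ if the formula obtained from $G$ by first replacing every atomic formula $A$ of $G$ with $x\in\mathrm{RV}(A)$ by $\bot$ and then applying the simplification transformations is $\top$ (resp. $\bot$).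 A semi-safe prenex sentence $Q_1x_1\cdots Q_nx_nM$ is safe if for every occurrence of every variable $x_i$: (a) if $Q_i=\forall$, the occurrence belongs to a positive subformula (of the sentence) in which $x_i$ is positively weakly restricted, or to a negative subformula in which $x_i$ is negatively weakly restricted; (b) if $Q_i=\exists$, the occurrence belongs to a negative subformula in which $x_i$ is positively weakly restricted, or to a positive subformula in which $x_i$ is negatively weakly restricted. Grounding: for a prenex sentence $F$ and nonempty finite set $\mathbf c$ of object constants, $\mathrm{Ground}_{\mathbf c}[F]$ is $F$ if $F$ is quantifier-free; $\mathrm{Ground}_{\mathbf c}[\forall xG(x)]=\bigwedge_{c\in\mathbf c}\mathrm{Ground}_{\mathbf c}[G(c)]$; $\mathrm{Ground}_{\mathbf c}[\exists xG(x)]=\bigvee_{c\in\mathbf c}\mathrm{Ground}_{\mathbf c}[G(c)]$. *)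

(* Defs.v *)
From Stdlib Require Import List Bool Arith.
Import ListNotations.
Set Implicit Arguments.

(* Object variables and object constants are named by natural numbers;
   predicate constants are named by natural numbers together with their
   arity (the length of the argument list). *)
Inductive term : Type :=
| Var (x : nat)
| Cst (c : nat).

Inductive form (P : Type) : Type :=
| FBot : form P
| FAtom : P -> list term -> form P
| FEq : term -> term -> form P
| FAnd : form P -> form P -> form P
| FOr : form P -> form P -> form P
| FImp : form P -> form P -> form P
| FAll : nat -> form P -> form P
| FEx : nat -> form P -> form P.
Arguments FBot {P}.
Arguments FEq {P}.

Definition FNeg {P} (G : form P) : form P := FImp G FBot.
Definition FTop {P} : form P := FImp FBot FBot.

Definition term_is_var (x : nat) (t : term) : bool :=
  match t with Var y => Nat.eqb x y | Cst _ => false end.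

Definition term_vars (t : term) : list nat :=
  match t with Var y => [y] | Cst _ => [] end.
Definition term_consts (t : term) : list nat :=
  match t with Var _ => [] | Cst c => [c] end.

Fixpoint fv {P} (F : form P) : list nat :=
  match F with
  | FBot => []
  | FAtom _ ts => flat_map term_vars ts
  | FEq t1 t2 => term_vars t1 ++ term_vars t2
  | FAnd G H | FOr G H | FImp G H => fv G ++ fv H
  | FAll x G | FEx x G => filter (fun y => negb (Nat.eqb x y)) (fv G)
  end.

Definition sentence {P} (F : form P) : Prop := fv F = [].

Fixpoint consts {P} (F : form P) : list nat :=
  match F with
  | FBot => []
  | FAtom _ ts => flat_map term_consts ts
  | FEq t1 t2 => term_consts t1 ++ term_consts t2
  | FAnd G H | FOr G H | FImp G H => consts G ++ consts H
  | FAll _ G | FEx _ G => consts G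
  end.

Fixpoint preds (F : form nat) : list (nat * nat) :=
  match F with
  | FBot | FEq _ _ => []
  | FAtom p ts => [(p, length ts)]
  | FAnd G H | FOr G H | FImp G H => preds G ++ preds H
  | FAll _ G | FEx _ G => preds G
  end.

Fixpoint qfree {P} (F : form P) : bool :=
  match F with
  | FBot | FAtom _ _ | FEq _ _ => true
  | FAnd G H | FOr G H | FImp G H => qfree G && qfree H
  | FAll _ _ | FEx _ _ => false
  end.

Fixpoint map_preds {P Q} (f : P -> Q) (F : form P) : form Q :=
  match F with
  | FBot => FBot
  | FAtom p ts => FAtom (f p) ts
  | FEq t1 t2 => FEq t1 t2
  | FAnd G H => FAnd (map_preds f G) (map_preds f H)
  | FOr G H => FOr (map_preds f G) (map_preds f H)
  | FImp G H => FImp (map_preds f G) (map_preds f H)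
  | FAll x G => FAll x (map_preds f G)
  | FEx x G => FEx x (map_preds f G)
  end.

(* An interpretation: a nonempty domain D (nonemptiness is a hypothesis of
   the theorem), values of object constants, and extents of predicate
   constants (a predicate of arity n is read on lists of length n). *)
Record interp (D : Type) : Type := Interp {
  ic : nat -> D;
  ip : nat -> list D -> Prop }.

Definition upd {D} (v : nat -> D) (x : nat) (d : D) : nat -> D :=
  fun y => if Nat.eqb x y then d else v y.

Definition eval_term {D} (c : nat -> D) (v : nat -> D) (t : term) : D :=
  match t with Var x => v x | Cst k => c k end.

Fixpoint sat {P D} (c : nat -> D) (r : P -> list D -> Prop) (v : nat -> D)
  (F : form P) : Prop :=
  match F with
  | FBot => False
  | FAtom p ts => r p (map (eval_term c v) ts)
  | FEq t1 t2 => eval_term c v t1 = eval_term c v t2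
  | FAnd G H => sat c r v G /\ sat c r v H
  | FOr G H => sat c r v G \/ sat c r v H
  | FImp G H => sat c r v G -> sat c r v H
  | FAll x G => forall d : D, sat c r (upd v x d) G
  | FEx x G => exists d : D, sat c r (upd v x d) G
  end.

Definition models {D} (I : interp D) (F : form nat) : Prop :=
  forall v : nat -> D, sat (ic I) (ip I) v F.

(* F*(u): formulas over predicate symbols  inl p  (the constant p) and
   inr p  (the predicate variable u_p of the same arity as p). *)
Fixpoint star (F : form nat) : form (nat + nat) :=
  match F with
  | FBot => FBot
  | FAtom p ts => FAtom (inr p) ts
  | FEq t1 t2 => FEq t1 t2
  | FAnd G H => FAnd (star G) (star H)
  | FOr G H => FOr (star G) (star H)
  | FImp G H => FAnd (FImp (star G) (star H))
                     (FImp (map_preds inl G) (map_preds inl H))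
  | FAll x G => FAll x (star G)
  | FEx x G => FEx x (star G)
  end.

Definition le_on {D} (ps : list (nat * nat)) (U R : nat -> list D -> Prop) : Prop :=
  forall p n, In (p, n) ps -> forall l : list D, length l = n -> U p l -> R p l.
Definition eq_on {D} (ps : list (nat * nat)) (U R : nat -> list D -> Prop) : Prop :=
  forall p n, In (p, n) ps -> forall l : list D, length l = n -> (U p l <-> R p l).
Definition lt_on {D} (ps : list (nat * nat)) (U R : nat -> list D -> Prop) : Prop :=
  le_on ps U R /\ ~ eq_on ps U R.

Definition with_vars {D} (R U : nat -> list D -> Prop) : nat + nat -> list D -> Prop :=
  fun s => match s with inl p => R p | inr p => U p end.

(* I |= SM[F] :  F /\ ~ exists u ((u < p) /\ F*(u)),
   the second-order quantifier ranging over all relations on the domain. *)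
Definition models_SM {D} (I : interp D) (F : form nat) : Prop :=
  models I F /\
  ~ (exists U : nat -> list D -> Prop,
        lt_on (preds F) U (ip I) /\
        forall v : nat -> D, sat (ic I) (with_vars (ip I) U) v (star F)).

Definition occ_term (x : nat) (t : term) : bool := term_is_var x t.

Fixpoint in_RV (x : nat) (G : form nat) : bool :=
  match G with
  | FBot => false
  | FAtom _ ts => existsb (occ_term x) ts
  | FEq t1 t2 =>
      match t1, t2 with
      | Var _, Var _ => false
      | _, _ => occ_term x t1 || occ_term x t2
      end
  | FAnd G H => in_RV x G || in_RV x H
  | FOr G H => in_RV x G && in_RV x H
  | FImp _ _ => false
  | FAll _ _ | FEx _ _ => false
  end.

Definition is_bot (F : form nat) : bool :=
  match F with FBot => true | _ => false end.
Definition is_top (F : form nat) : bool :=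
  match F with FImp FBot FBot => true | _ => false end.

(* exhaustive (bottom-up) application of the simplification transformations *)
Fixpoint simp (F : form nat) : form nat :=
  match F with
  | FAnd G H =>
      let G' := simp G in let H' := simp H in
      if is_bot G' then FBot else if is_bot H' then FBot
      else if is_top G' then H' else if is_top H' then G'
      else FAnd G' H'
  | FOr G H =>
      let G' := simp G in let H' := simp H in
      if is_bot G' then H' else if is_bot H' then G'
      else if is_top G' then FTop else if is_top H' then FTop
      else FOr G' H'
  | FImp G H =>
      let G' := simp G in let H' := simp H in
      if is_bot G' then FTop else if is_top H' then FTop
      else if is_top G' then H'
      else FImp G' H'
  | FAll x G => FAll x (simp G)
  | FEx x G => FEx x (simp G)
  | _ => F
  end.

Fixpoint repl_RV (x : nat) (F : form nat) : form nat :=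
  match F with
  | FBot => FBot
  | FAtom _ _ | FEq _ _ => if in_RV x F then FBot else F
  | FAnd G H => FAnd (repl_RV x G) (repl_RV x H)
  | FOr G H => FOr (repl_RV x G) (repl_RV x H)
  | FImp G H => FImp (repl_RV x G) (repl_RV x H)
  | FAll y G => FAll y (repl_RV x G)
  | FEx y G => FEx y (repl_RV x G)
  end.

Definition pos_weakly_restricted (x : nat) (G : form nat) : bool :=
  is_top (simp (repl_RV x G)).
Definition neg_weakly_restricted (x : nat) (G : form nat) : bool :=
  is_bot (simp (repl_RV x G)).

Fixpoint prefix_matrix (F : form nat) : list (bool * nat) * form nat :=
  match F with
  | FAll x G => let (pre, M) := prefix_matrix G in ((true, x) :: pre, M)
  | FEx x G => let (pre, M) := prefix_matrix G in ((false, x) :: pre, M)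
  | _ => ([], F)
  end.

Definition atom_contains (x : nat) (F : form nat) : bool :=
  match F with
  | FAtom _ ts => existsb (occ_term x) ts
  | FEq t1 t2 => occ_term x t1 || occ_term x t2
  | _ => false
  end.

(* every strictly positive occurrence of x in M belongs to a subformula
   G -> H with x \in RV(G) *)
Fixpoint sp_covered (x : nat) (M : form nat) : bool :=
  match M with
  | FBot => true
  | FAtom _ _ | FEq _ _ => negb (atom_contains x M)
  | FAnd G H | FOr G H => sp_covered x G && sp_covered x H
  | FImp G H => in_RV x G || sp_covered x H
  | FAll _ G | FEx _ G => sp_covered x G
  end.

(* condition (a)/(b) for a subformula S of polarity pol (true = positive) *)
Definition good_subformula (q : bool) (x : nat) (pol : bool) (S : form nat) : bool :=
  if q then (pol && pos_weakly_restricted x S) || (negb pol && neg_weakly_restricted x S)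
  else (negb pol && pos_weakly_restricted x S) || (pol && neg_weakly_restricted x S).

(* every occurrence of x in S belongs to some good subformula; [cov] records
   whether an enclosing subformula is already good; [pol] is the polarity of S *)
Fixpoint occ_safe (q : bool) (x : nat) (pol cov : bool) (S : form nat) : bool :=
  let cov' := cov || good_subformula q x pol S in
  match S with
  | FBot => true
  | FAtom _ _ | FEq _ _ => implb (atom_contains x S) cov'
  | FAnd G H | FOr G H => occ_safe q x pol cov' G && occ_safe q x pol cov' H
  | FImp G H => occ_safe q x (negb pol) cov' G && occ_safe q x pol cov' H
  | FAll _ G | FEx _ G => occ_safe q x pol cov' G
  end.

Definition semi_safe (F : form nat) : Prop :=
  let (pre, M) := prefix_matrix F in
  sentence F /\ qfree M = true /\ NoDup (map snd pre) /\
  forall q x, In (q, x) pre -> sp_covered x M = true.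

Definition safe (F : form nat) : Prop :=
  semi_safe F /\
  let (pre, M) := prefix_matrix F in
  forall q x, In (q, x) pre -> occ_safe q x true false M = true.

Fixpoint bigAnd (l : list (form nat)) : form nat :=
  match l with
  | [] => FTop
  | [G] => G
  | G :: l' => FAnd G (bigAnd l')
  end.
Fixpoint bigOr (l : list (form nat)) : form nat :=
  match l with
  | [] => FBot
  | [G] => G
  | G :: l' => FOr G (bigOr l')
  end.

Definition subst_term (s : list (nat * nat)) (t : term) : term :=
  match t with
  | Var x => match find (fun p => Nat.eqb x (fst p)) s with
             | Some (_, c) => Cst c | None => Var x end
  | Cst c => Cst c
  end.

Fixpoint subst (s : list (nat * nat)) (F : form nat) : form nat :=
  match F with
  | FBot => FBot
  | FAtom p ts => FAtom p (map (subst_term s) ts)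
  | FEq t1 t2 => FEq (subst_term s t1) (subst_term s t2)
  | FAnd G H => FAnd (subst s G) (subst s H)
  | FOr G H => FOr (subst s G) (subst s H)
  | FImp G H => FImp (subst s G) (subst s H)
  | FAll x G => FAll x (subst (filter (fun p => negb (Nat.eqb x (fst p))) s) G)
  | FEx x G => FEx x (subst (filter (fun p => negb (Nat.eqb x (fst p))) s) G)
  end.

(* ground_aux cs s F = Ground_cs[F s] for a prenex F *)
Fixpoint ground_aux (cs : list nat) (s : list (nat * nat)) (F : form nat) : form nat :=
  match F with
  | FAll x G => bigAnd (map (fun c => ground_aux cs ((x, c) :: s) G) cs)
  | FEx x G => bigOr (map (fun c => ground_aux cs ((x, c) :: s) G) cs)
  | _ => subst s F
  end.

Definition Ground (cs : list nat) (F : form nat) : form nat := ground_aux cs [] F.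

(* Main.v *)
Require Import Defs.
From Stdlib Require Import List Bool Arith Classical FunctionalExtensionality.
Import ListNotations.

Fixpoint quant {P} (pre : list (bool*nat)) (M : form P) : form P :=
  match pre with
  | [] => M
  | (q,x)::p => if q then FAll x (quant p M) else FEx x (quant p M)
  end.

Lemma prefix_quant : forall F pre M, prefix_matrix F = (pre, M) -> F = quant pre M.
Proof.
  induction F; simpl; intros pre M0 E; try (inversion E; reflexivity).
  - destruct (prefix_matrix F) as [p m] eqn:E'. inversion E; subst. simpl. f_equal. apply IHF; auto.
  - destruct (prefix_matrix F) as [p m] eqn:E'. inversion E; subst. simpl. f_equal. apply IHF; auto.
Qed.

Fixpoint semq {D} (dom : D -> Prop) (pre : list (bool*nat)) (phi : (nat -> D) -> Prop) (v : nat -> D) : Prop :=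
  match pre with
  | [] => phi v
  | (q,x)::p => if q then forall d, dom d -> semq dom p phi (upd v x d)
                else exists d, dom d /\ semq dom p phi (upd v x d)
  end.

Lemma sat_quant {P D} (c : nat -> D) (r : P -> list D -> Prop) pre M : forall v,
  sat c r v (quant pre M) <-> semq (fun _ => True) pre (fun w => sat c r w M) v.
Proof.
  induction pre as [|[[|] x] pre IH]; simpl; intros v.
  - tauto.
  - split; intros H d; [intros _; apply IH, H | apply IH, H; exact I].
  - split; intros [d Hd]; exists d; [split; [exact I| apply IH; exact Hd] | apply IH; apply Hd].
Qed.

Lemma semq_ext {D} (dom : D -> Prop) pre (phi1 phi2 : (nat -> D) -> Prop) :
  (forall w, phi1 w <-> phi2 w) -> forall v, semq dom pre phi1 v <-> semq dom pre phi2 v.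
Proof.
  intros H; induction pre as [|[[|] x] pre IH]; simpl; intros v.
  - apply H.
  - split; intros H1 d Hd; apply IH; auto.
  - split; intros [d [Hd H1]]; exists d; split; auto; apply IH; auto.
Qed.

Lemma upd_same {D} (v : nat -> D) x d : upd v x d x = d.
Proof. unfold upd; rewrite Nat.eqb_refl; auto. Qed.

Lemma upd_other {D} (v : nat -> D) x d y : x <> y -> upd v x d y = v y.
Proof. unfold upd; intros H; apply Nat.eqb_neq in H; rewrite H; auto. Qed.

Lemma upd_comm {D} (v : nat -> D) x y a b : x <> y -> upd (upd v x a) y b = upd (upd v y b) x a.
Proof.
  intros H; apply functional_extensionality; intro z; unfold upd.
  destruct (Nat.eqb_spec y z), (Nat.eqb_spec x z); subst; congruence.
Qed.

Lemma semq_transport {D} (dom : D -> Prop) pre phi x a b :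
  ~ In x (map snd pre) -> (forall w, phi (upd w x a) -> phi (upd w x b)) ->
  forall v, semq dom pre phi (upd v x a) -> semq dom pre phi (upd v x b).
Proof.
  intros Hx Hphi; induction pre as [|[q y] pre IH]; simpl in *; intros v.
  - apply Hphi.
  - assert (Hxy : x <> y) by (intro; subst; apply Hx; left; auto). assert (Hx' : ~ In x (map snd pre)) by tauto.
    destruct q.
    + intros H d Hd. specialize (H d Hd). rewrite upd_comm in H |- * by auto. apply IH; auto.
    + intros [d [Hd H]]. exists d. split; auto. rewrite upd_comm in H |- * by auto. apply IH; auto.
Qed.

Definition InH {D} (c : nat -> D) (cs : list nat) (d : D) : Prop := exists k, In k cs /\ c k = d.

Lemma semq_rel {D} (dom : D -> Prop) (pre : list (bool*nat)) (phi : (nat -> D) -> Prop) :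
  NoDup (map snd pre) -> (exists d0, dom d0) ->
  (forall q x, In (q,x) pre -> forall w d d', ~ dom d ->
     if q then phi (upd w x d') -> phi (upd w x d) else phi (upd w x d) -> phi (upd w x d')) ->
  forall v, semq (fun _ => True) pre phi v <-> semq dom pre phi v.
Proof.
  intros ND [d0 Hd0] Hc. revert ND Hc. induction pre as [|[q x] pre IH]; simpl; intros ND Hc v.
  - tauto.
  - inversion ND as [|? ? Hnin ND']; subst.
    assert (IH' : forall v, semq (fun _ => True) pre phi v <-> semq dom pre phi v)
      by (apply IH; auto; intros; eapply Hc; eauto).
    destruct q.
    + split.
      * intros H d _. apply IH', H; exact I.
      * intros H d _. apply IH'. destruct (classic (dom d)) as [Hd|Hd]; [auto|].
        apply (semq_transport dom pre phi x d0 d Hnin); [| apply H; auto].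
        intros w. exact (Hc true x (or_introl eq_refl) w d d0 Hd).
    + split.
      * intros [d [_ H]]. apply IH' in H. destruct (classic (dom d)) as [Hd|Hd]; [eauto|].
        exists d0; split; auto. apply (semq_transport dom pre phi x d d0 Hnin); auto.
        intros w. exact (Hc false x (or_introl eq_refl) w d d0 Hd).
      * intros [d [Hd H]]. exists d. split; [exact I|]. apply IH'; auto.
Qed.
Lemma sat_map_preds {P Q D} (c : nat -> D) (f : P -> Q) (r : Q -> list D -> Prop) G : forall v,
  sat c r v (map_preds f G) <-> sat c (fun p => r (f p)) v G.
Proof.
  induction G; simpl; intros v; try tauto.
  - rewrite IHG1, IHG2; tauto.
  - rewrite IHG1, IHG2; tauto.
  - rewrite IHG1, IHG2; tauto.
  - split; intros H d; apply IHG; auto.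
  - split; intros [d H]; exists d; apply IHG; auto.
Qed.

Lemma sat_inl {D} (c : nat -> D) (R U : nat -> list D -> Prop) G v :
  sat c (with_vars R U) v (map_preds inl G) <-> sat c R v G.
Proof. exact (sat_map_preds c inl (with_vars R U) G v). Qed.

Lemma ext_cl {D} (c : nat -> D) (X : form nat) : forall (r1 r2 : nat -> list D -> Prop),
  (forall p l, In (p, length l) (preds X) -> (r1 p l <-> r2 p l)) ->
  forall v, sat c r1 v X <-> sat c r2 v X.
Proof.
  induction X; simpl; intros r1 r2 H v; try tauto.
  - apply H. rewrite length_map. left; auto.
  - rewrite (IHX1 r1 r2), (IHX2 r1 r2); [tauto| |]; intros; apply H; apply in_or_app; auto.
  - rewrite (IHX1 r1 r2), (IHX2 r1 r2); [tauto| |]; intros; apply H; apply in_or_app; auto.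
  - rewrite (IHX1 r1 r2), (IHX2 r1 r2); [tauto| |]; intros; apply H; apply in_or_app; auto.
  - split; intros H1 d; eapply IHX; eauto. intros; symmetry; auto.
  - split; intros [d H1]; exists d; eapply IHX; eauto. intros; symmetry; auto.
Qed.

Lemma ext_star {D} (c : nat -> D) (X : form nat) : forall (R1 U1 R2 U2 : nat -> list D -> Prop),
  (forall p l, In (p, length l) (preds X) -> (R1 p l <-> R2 p l) /\ (U1 p l <-> U2 p l)) ->
  forall v, sat c (with_vars R1 U1) v (star X) <-> sat c (with_vars R2 U2) v (star X).
Proof.
  induction X; simpl; intros R1 U1 R2 U2 H v; try tauto.
  - apply H. rewrite length_map. left; auto.
  - rewrite (IHX1 R1 U1 R2 U2), (IHX2 R1 U1 R2 U2); [tauto| |]; intros; apply H; apply in_or_app; auto.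
  - rewrite (IHX1 R1 U1 R2 U2), (IHX2 R1 U1 R2 U2); [tauto| |]; intros; apply H; apply in_or_app; auto.
  - rewrite (IHX1 R1 U1 R2 U2), (IHX2 R1 U1 R2 U2); [| intros; apply H; apply in_or_app; auto ..].
    rewrite !sat_inl. rewrite (ext_cl c X1 R1 R2), (ext_cl c X2 R1 R2); [tauto| |];
    intros; apply H; apply in_or_app; auto.
  - split; intros H1 d; eapply IHX; eauto. intros p l Hp; specialize (H p l Hp); tauto.
  - split; intros [d H1]; exists d; eapply IHX; eauto. intros p l Hp; specialize (H p l Hp); tauto.
Qed.

Lemma star_cl {D} (c : nat -> D) (R U : nat -> list D -> Prop) :
  (forall p l, U p l -> R p l) -> forall G v, sat c (with_vars R U) v (star G) -> sat c R v G.
Proof.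
  intros HU G; induction G; simpl; intros v.
  - auto.
  - apply HU.
  - auto.
  - intros [H1 H2]; auto.
  - intros [H1|H2]; auto.
  - intros [_ H]. rewrite !sat_inl in H. auto.
  - intros H d; auto.
  - intros [d H]; eauto.
Qed.

Lemma is_bot_eq G : is_bot G = true -> G = FBot.
Proof. destruct G; simpl; congruence. Qed.
Lemma is_top_eq G : is_top G = true -> G = FTop.
Proof. destruct G; simpl; try congruence. destruct G1; try congruence. destruct G2; try reflexivity; simpl; congruence. Qed.

Ltac solve_simp :=
  repeat match goal with
  | |- context [is_bot ?G] => let E := fresh "E" in destruct (is_bot G) eqn:E; [apply is_bot_eq in E; rewrite ?E in *|]
  | |- context [is_top ?G] => let E := fresh "E" in destruct (is_top G) eqn:E; [apply is_top_eq in E; rewrite ?E in *|]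
  end.

Lemma simp_cl {D} (c : nat -> D) (r : nat -> list D -> Prop) S : forall v,
  sat c r v (simp S) <-> sat c r v S.
Proof.
  induction S; intros v; try (simpl; tauto).
  - simpl. solve_simp; simpl in *; specialize (IHS1 v); specialize (IHS2 v); simpl in *; tauto.
  - simpl. solve_simp; simpl in *; specialize (IHS1 v); specialize (IHS2 v); simpl in *; tauto.
  - simpl. solve_simp; simpl in *; specialize (IHS1 v); specialize (IHS2 v); simpl in *; tauto.
  - simpl. split; intros H d; apply IHS; auto.
  - simpl. split; intros [d H]; exists d; apply IHS; auto.
Qed.

Lemma simp_star {D} (c : nat -> D) (R U : nat -> list D -> Prop) :
  (forall p l, U p l -> R p l) -> forall S v,
  sat c (with_vars R U) v (star (simp S)) <-> sat c (with_vars R U) v (star S).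
Proof.
  intros HU S; induction S; intros v; try (simpl; tauto).
  - simpl. solve_simp; simpl in *; specialize (IHS1 v); specialize (IHS2 v); simpl in *; tauto.
  - simpl. solve_simp; simpl in *; specialize (IHS1 v); specialize (IHS2 v); simpl in *; tauto.
  - pose proof (simp_cl c R S1 v) as C1. pose proof (simp_cl c R S2 v) as C2.
    pose proof (star_cl c R U HU S1 v) as K1. pose proof (star_cl c R U HU S2 v) as K2.
    simpl. solve_simp; simpl in *; specialize (IHS1 v); specialize (IHS2 v); simpl in *;
    rewrite ?sat_inl; tauto.
  - simpl. split; intros H d; apply IHS; auto.
  - simpl. split; intros [d H]; exists d; apply IHS; auto.
Qed.

Definition Bnd {D} (c : nat -> D) (cs : list nat) (r : nat -> list D -> Prop) : Prop :=
  forall p l, r p l -> Forall (InH c cs) l.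

Lemma atom_rv {D} (c : nat -> D) cs v x ts :
  existsb (occ_term x) ts = true -> ~ InH c cs (v x) -> ~ Forall (InH c cs) (map (eval_term c v) ts).
Proof.
  intros H Hv HF. apply existsb_exists in H as [t [Hin Ho]].
  destruct t as [n|k]; simpl in Ho; [apply Nat.eqb_eq in Ho; subst | discriminate].
  rewrite Forall_forall in HF. apply Hv. apply HF. apply in_map_iff. eexists; split; [|exact Hin]; reflexivity.
Qed.

Ltac split_bin Hq Hc :=
  simpl in Hq; apply andb_prop in Hq as [?Hq1 ?Hq2]; simpl in Hc; apply incl_app_inv in Hc as [?Hc1 ?Hc2].

Lemma repl_cl {D} (c : nat -> D) cs (R : nat -> list D -> Prop) x : Bnd c cs R ->
  forall S v, qfree S = true -> incl (consts S) cs -> ~ InH c cs (v x) ->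
  (sat c R v (repl_RV x S) <-> sat c R v S).
Proof.
  intros HB S; induction S; intros v Hq Hc Hv.
  - simpl; tauto.
  - simpl. destruct (existsb (occ_term x) l) eqn:E; simpl; [|tauto].
    split; [tauto|]. intro HR. apply HB in HR. exfalso; eapply atom_rv; eauto.
  - destruct t as [y|k], t0 as [y'|k']; simpl; try tauto.
    + destruct (Nat.eqb_spec x y); simpl; [|tauto]. subst. split; [tauto|]. intro Heq.
      exfalso; apply Hv; exists k'; split; [apply Hc; simpl; auto| auto].
    + destruct (Nat.eqb_spec x y'); simpl; [|tauto]. subst. split; [tauto|]. intro Heq.
      exfalso; apply Hv; exists k; split; [apply Hc; simpl; auto| auto].
  - split_bin Hq Hc. simpl. rewrite IHS1, IHS2 by auto. tauto.
  - split_bin Hq Hc. simpl. rewrite IHS1, IHS2 by auto. tauto.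
  - split_bin Hq Hc. simpl. rewrite IHS1, IHS2 by auto. tauto.
  - discriminate.
  - discriminate.
Qed.

Lemma repl_star {D} (c : nat -> D) cs (R U : nat -> list D -> Prop) x : Bnd c cs R -> Bnd c cs U ->
  forall S v, qfree S = true -> incl (consts S) cs -> ~ InH c cs (v x) ->
  (sat c (with_vars R U) v (star (repl_RV x S)) <-> sat c (with_vars R U) v (star S)).
Proof.
  intros HB HBU S; induction S; intros v Hq Hc Hv.
  - simpl; tauto.
  - simpl. destruct (existsb (occ_term x) l) eqn:E; simpl; [|tauto].
    split; [tauto|]. intro HR. apply HBU in HR. exfalso; eapply atom_rv; eauto.
  - destruct t as [y|k], t0 as [y'|k']; simpl; try tauto.
    + destruct (Nat.eqb_spec x y); simpl; [|tauto]. subst. split; [tauto|]. intro Heq.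
      exfalso; apply Hv; exists k'; split; [apply Hc; simpl; auto| auto].
    + destruct (Nat.eqb_spec x y'); simpl; [|tauto]. subst. split; [tauto|]. intro Heq.
      exfalso; apply Hv; exists k; split; [apply Hc; simpl; auto| auto].
  - split_bin Hq Hc. simpl. rewrite IHS1, IHS2 by auto. tauto.
  - split_bin Hq Hc. simpl. rewrite IHS1, IHS2 by auto. tauto.
  - split_bin Hq Hc. simpl. rewrite IHS1, IHS2 by auto. rewrite !sat_inl.
    rewrite !(repl_cl c cs R x HB) by auto. tauto.
  - discriminate.
  - discriminate.
Qed.

Lemma wr_true {D} (c : nat -> D) cs (R : nat -> list D -> Prop) x S v : Bnd c cs R ->
  qfree S = true -> incl (consts S) cs -> ~ InH c cs (v x) ->
  pos_weakly_restricted x S = true -> sat c R v S.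
Proof.
  intros HB Hq Hc Hv H. unfold pos_weakly_restricted in H. apply is_top_eq in H.
  apply (repl_cl c cs R x HB S v); auto. apply simp_cl. rewrite H. simpl. auto.
Qed.

Lemma wr_false {D} (c : nat -> D) cs (R : nat -> list D -> Prop) x S v : Bnd c cs R ->
  qfree S = true -> incl (consts S) cs -> ~ InH c cs (v x) ->
  neg_weakly_restricted x S = true -> ~ sat c R v S.
Proof.
  intros HB Hq Hc Hv H HS. unfold neg_weakly_restricted in H. apply is_bot_eq in H.
  apply (repl_cl c cs R x HB S v) in HS; auto. apply simp_cl in HS. rewrite H in HS. exact HS.
Qed.

Lemma wr_star_true {D} (c : nat -> D) cs (R U : nat -> list D -> Prop) x S v : Bnd c cs R -> Bnd c cs U ->
  (forall p l, U p l -> R p l) ->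
  qfree S = true -> incl (consts S) cs -> ~ InH c cs (v x) ->
  pos_weakly_restricted x S = true -> sat c (with_vars R U) v (star S).
Proof.
  intros HB HBU HUR Hq Hc Hv H. unfold pos_weakly_restricted in H. apply is_top_eq in H.
  apply (repl_star c cs R U x HB HBU S v); auto. apply simp_star; auto. rewrite H. simpl. auto.
Qed.

Lemma wr_star_false {D} (c : nat -> D) cs (R U : nat -> list D -> Prop) x S v : Bnd c cs R -> Bnd c cs U ->
  (forall p l, U p l -> R p l) ->
  qfree S = true -> incl (consts S) cs -> ~ InH c cs (v x) ->
  neg_weakly_restricted x S = true -> ~ sat c (with_vars R U) v (star S).
Proof.
  intros HB HBU HUR Hq Hc Hv H HS. unfold neg_weakly_restricted in H. apply is_bot_eq in H.
  apply (repl_star c cs R U x HB HBU S v) in HS; auto. apply simp_star in HS; auto.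
  rewrite H in HS. exact HS.
Qed.

Lemma good_cl {D} (c : nat -> D) cs (R : nat -> list D -> Prop) q x pol S : Bnd c cs R ->
  qfree S = true -> incl (consts S) cs -> good_subformula q x pol S = true ->
  forall v w, ~ InH c cs (v x) ->
  if Bool.eqb q pol then (sat c R w S -> sat c R v S) else (sat c R v S -> sat c R w S).
Proof.
  intros HB Hq Hc G v w Hv. unfold good_subformula in G.
  destruct q, pol; simpl in G; rewrite ?orb_false_r in G; simpl;
  first [intros _; solve [eapply (wr_true c cs R x S v); eauto] | intro H; exfalso; solve [eapply (wr_false c cs R x S v); eauto]].
Qed.

Lemma good_star {D} (c : nat -> D) cs (R U : nat -> list D -> Prop) q x pol S : Bnd c cs R -> Bnd c cs U ->
  (forall p l, U p l -> R p l) ->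
  qfree S = true -> incl (consts S) cs -> good_subformula q x pol S = true ->
  forall v w, ~ InH c cs (v x) ->
  if Bool.eqb q pol then (sat c (with_vars R U) w (star S) -> sat c (with_vars R U) v (star S))
  else (sat c (with_vars R U) v (star S) -> sat c (with_vars R U) w (star S)).
Proof.
  intros HB HBU HUR Hq Hc G v w Hv. unfold good_subformula in G.
  destruct q, pol; simpl in G; rewrite ?orb_false_r in G; simpl;
  first [intros _; solve [eapply (wr_star_true c cs R U x S v); eauto] | intro H; exfalso; solve [eapply (wr_star_false c cs R U x S v); eauto]].
Qed.

Definition occ_body (q : bool) (x : nat) (pol : bool) (S : form nat) : bool :=
  match S with
  | FBot => true
  | FAtom _ _ | FEq _ _ => implb (atom_contains x S) false
  | FAnd G H | FOr G H => occ_safe q x pol false G && occ_safe q x pol false H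
  | FImp G H => occ_safe q x (negb pol) false G && occ_safe q x pol false H
  | FAll _ G | FEx _ G => occ_safe q x pol false G
  end.

Lemma occ_cases q x pol S : occ_safe q x pol false S = true ->
  good_subformula q x pol S = true \/ occ_body q x pol S = true.
Proof.
  intros H. destruct (good_subformula q x pol S) eqn:G; [left; reflexivity| right].
  destruct S; simpl in *; try rewrite G in H; simpl in H; exact H.
Qed.

Lemma eval_term_agree {D} (c : nat -> D) v w x t : occ_term x t = false ->
  (forall y, y <> x -> v y = w y) -> eval_term c v t = eval_term c w t.
Proof.
  destruct t as [n|k]; simpl; auto. intros H Hag. apply Nat.eqb_neq in H. apply Hag; auto.
Qed.

Lemma eval_agree {D} (c : nat -> D) v w x ts : existsb (occ_term x) ts = false ->
  (forall y, y <> x -> v y = w y) -> map (eval_term c v) ts = map (eval_term c w) ts.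
Proof.
  induction ts as [|t ts IH]; simpl; intros H Hag; auto.
  apply orb_false_iff in H as [H1 H2]. f_equal; [eapply eval_term_agree|]; eauto.
Qed.

Lemma mono_cl {D} (c : nat -> D) cs (R : nat -> list D -> Prop) q x : Bnd c cs R ->
  forall S pol, qfree S = true -> incl (consts S) cs -> occ_safe q x pol false S = true ->
  forall v w, ~ InH c cs (v x) -> (forall y, y <> x -> v y = w y) ->
  if Bool.eqb q pol then (sat c R w S -> sat c R v S) else (sat c R v S -> sat c R w S).
Proof.
  intros HB S; induction S; intros pol Hq Hc Ho v w Hv Hag;
    (destruct (occ_cases _ _ _ _ Ho) as [G|B]; [eapply good_cl; eauto| ]); simpl in B.
  - simpl; destruct (Bool.eqb q pol); tauto.
  - simpl. destruct (existsb (occ_term x) l) eqn:E; [discriminate|].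
    rewrite (eval_agree c v w x l E Hag). destruct (Bool.eqb q pol); tauto.
  - simpl. destruct (occ_term x t) eqn:E1, (occ_term x t0) eqn:E2; try discriminate.
    rewrite (eval_term_agree c v w x t E1 Hag), (eval_term_agree c v w x t0 E2 Hag).
    destruct (Bool.eqb q pol); tauto.
  - split_bin Hq Hc. apply andb_prop in B as [B1 B2].
    pose proof (IHS1 pol Hq1 Hc1 B1 v w Hv Hag) as I1. pose proof (IHS2 pol Hq2 Hc2 B2 v w Hv Hag) as I2.
    simpl; destruct (Bool.eqb q pol); tauto.
  - split_bin Hq Hc. apply andb_prop in B as [B1 B2].
    pose proof (IHS1 pol Hq1 Hc1 B1 v w Hv Hag) as I1. pose proof (IHS2 pol Hq2 Hc2 B2 v w Hv Hag) as I2.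
    simpl; destruct (Bool.eqb q pol); tauto.
  - split_bin Hq Hc. apply andb_prop in B as [B1 B2].
    pose proof (IHS1 (negb pol) Hq1 Hc1 B1 v w Hv Hag) as I1. pose proof (IHS2 pol Hq2 Hc2 B2 v w Hv Hag) as I2.
    simpl; destruct q, pol; simpl in *; tauto.
  - discriminate.
  - discriminate.
Qed.

Lemma mono_star {D} (c : nat -> D) cs (R U : nat -> list D -> Prop) q x : Bnd c cs R -> Bnd c cs U ->
  (forall p l, U p l -> R p l) ->
  forall S pol, qfree S = true -> incl (consts S) cs -> occ_safe q x pol false S = true ->
  forall v w, ~ InH c cs (v x) -> (forall y, y <> x -> v y = w y) ->
  if Bool.eqb q pol then (sat c (with_vars R U) w (star S) -> sat c (with_vars R U) v (star S))
  else (sat c (with_vars R U) v (star S) -> sat c (with_vars R U) w (star S)).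
Proof.
  intros HB HBU HUR S; induction S; intros pol Hq Hc Ho v w Hv Hag;
    (destruct (occ_cases _ _ _ _ Ho) as [G|B]; [eapply good_star; eauto| ]); simpl in B.
  - simpl; destruct (Bool.eqb q pol); tauto.
  - simpl. destruct (existsb (occ_term x) l) eqn:E; [discriminate|].
    rewrite (eval_agree c v w x l E Hag). destruct (Bool.eqb q pol); tauto.
  - simpl. destruct (occ_term x t) eqn:E1, (occ_term x t0) eqn:E2; try discriminate.
    rewrite (eval_term_agree c v w x t E1 Hag), (eval_term_agree c v w x t0 E2 Hag).
    destruct (Bool.eqb q pol); tauto.
  - split_bin Hq Hc. apply andb_prop in B as [B1 B2].
    pose proof (IHS1 pol Hq1 Hc1 B1 v w Hv Hag) as I1. pose proof (IHS2 pol Hq2 Hc2 B2 v w Hv Hag) as I2.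
    simpl; destruct (Bool.eqb q pol); tauto.
  - split_bin Hq Hc. apply andb_prop in B as [B1 B2].
    pose proof (IHS1 pol Hq1 Hc1 B1 v w Hv Hag) as I1. pose proof (IHS2 pol Hq2 Hc2 B2 v w Hv Hag) as I2.
    simpl; destruct (Bool.eqb q pol); tauto.
  - split_bin Hq Hc. apply andb_prop in B as [B1 B2].
    pose proof (IHS1 (negb pol) Hq1 Hc1 B1 v w Hv Hag) as I1. pose proof (IHS2 pol Hq2 Hc2 B2 v w Hv Hag) as I2.
    pose proof (mono_cl c cs R q x HB S1 (negb pol) Hq1 Hc1 B1 v w Hv Hag) as J1.
    pose proof (mono_cl c cs R q x HB S2 pol Hq2 Hc2 B2 v w Hv Hag) as J2.
    pose proof (sat_inl c R U S1 v). pose proof (sat_inl c R U S2 v).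
    pose proof (sat_inl c R U S1 w). pose proof (sat_inl c R U S2 w).
    simpl; destruct q, pol; simpl in *; tauto.
  - discriminate.
  - discriminate.
Qed.

Lemma rv_star {D} (c : nat -> D) cs (R U : nat -> list D -> Prop) x : Bnd c cs U ->
  forall G v, qfree G = true -> incl (consts G) cs -> in_RV x G = true -> ~ InH c cs (v x) ->
  ~ sat c (with_vars R U) v (star G).
Proof.
  intros HBU G; induction G; intros v Hq Hc Hr Hv; simpl in Hr; try discriminate.
  - simpl. intro HU. apply HBU in HU. eapply atom_rv; eauto.
  - destruct t as [y|k], t0 as [y'|k']; simpl in *; rewrite ?orb_false_r in Hr; try discriminate;
      apply Nat.eqb_eq in Hr; subst; intro Heq; apply Hv.
    + exists k'; split; [apply Hc; simpl; auto| auto].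
    + exists k; split; [apply Hc; simpl; auto| auto].
  - split_bin Hq Hc. simpl. apply orb_prop in Hr as [Hr|Hr]; intros [H1 H2]; [eapply IHG1|eapply IHG2]; eauto.
  - split_bin Hq Hc. simpl. apply andb_prop in Hr as [Hr1 Hr2]; intros [H1|H2]; [eapply IHG1|eapply IHG2]; eauto.
Qed.

Lemma atom_hd {D} (c : nat -> D) cs v l : incl (flat_map term_consts l) cs ->
  (forall y, ~ InH c cs (v y) -> existsb (occ_term y) l = false) ->
  Forall (InH c cs) (map (eval_term c v) l).
Proof.
  intros Hc H. apply Forall_forall. intros d Hd. apply in_map_iff in Hd as [t [Ht Hin]]. subst d.
  destruct t as [y|k]; simpl.
  - destruct (classic (InH c cs (v y))) as [Hy|Hy]; auto. exfalso.
    assert (E : existsb (occ_term y) l = true)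
      by (apply existsb_exists; exists (Var y); simpl; rewrite Nat.eqb_refl; auto).
    rewrite H in E by auto. discriminate.
  - exists k. split; auto. apply Hc. apply in_flat_map. exists (Cst k). simpl; auto.
Qed.

Lemma sp_claim {D} (c : nat -> D) cs (R U : nat -> list D -> Prop) :
  (forall p l, U p l <-> R p l /\ Forall (InH c cs) l) ->
  forall M v, qfree M = true -> incl (consts M) cs ->
  (forall x, ~ InH c cs (v x) -> sp_covered x M = true) ->
  (sat c (with_vars R U) v (star M) <-> sat c R v M).
Proof.
  intros HU. assert (HUR : forall p l, U p l -> R p l) by (intros p l H; apply HU in H; tauto).
  assert (HBU : Bnd c cs U) by (intros p l H; apply HU in H; tauto).
  intros M; induction M; intros v Hq Hc H.
  - simpl; tauto.
  - simpl. rewrite HU. assert (Forall (InH c cs) (map (eval_term c v) l)); [|tauto].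
    apply atom_hd; auto. intros y Hy. specialize (H y Hy). simpl in H. apply negb_true_iff in H; auto.
  - simpl; tauto.
  - split_bin Hq Hc. simpl. rewrite IHM1, IHM2; auto; [tauto| |];
      intros x Hx; specialize (H x Hx); simpl in H; apply andb_prop in H; tauto.
  - split_bin Hq Hc. simpl. rewrite IHM1, IHM2; auto; [tauto| |];
      intros x Hx; specialize (H x Hx); simpl in H; apply andb_prop in H; tauto.
  - split_bin Hq Hc. pose proof (sat_inl c R U M1 v). pose proof (sat_inl c R U M2 v).
    destruct (classic (exists x, ~ InH c cs (v x) /\ in_RV x M1 = true)) as [[x [Hx Hr]]|Hn].
    + pose proof (rv_star c cs R U x HBU M1 v Hq1 Hc1 Hr Hx). simpl. tauto.
    + assert (H2 : forall x, ~ InH c cs (v x) -> sp_covered x M2 = true).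
      { intros x Hx. specialize (H x Hx). simpl in H. apply orb_prop in H as [H|H]; auto.
        exfalso; apply Hn; eauto. }
      specialize (IHM2 v Hq2 Hc2 H2). pose proof (star_cl c R U HUR M1 v). simpl. tauto.
  - discriminate.
  - discriminate.
Qed.

Lemma sp_nofv : forall M x, qfree M = true -> ~ In x (fv M) -> sp_covered x M = true.
Proof.
  induction M; intros x Hq H; simpl in *; auto; try discriminate.
  - apply negb_true_iff. destruct (existsb (occ_term x) l) eqn:E; auto.
    apply existsb_exists in E as [t [Hin Ho]]. destruct t as [y|k]; simpl in Ho; try discriminate.
    apply Nat.eqb_eq in Ho; subst. exfalso; apply H. apply in_flat_map. exists (Var y); simpl; auto.
  - destruct t as [y|k], t0 as [y'|k']; simpl in *;
      repeat match goal with |- context [Nat.eqb ?a ?b] => destruct (Nat.eqb_spec a b) end;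
      subst; simpl; auto; exfalso; apply H; auto with datatypes.
  - apply andb_prop in Hq as [H1 H2]. rewrite IHM1, IHM2; auto; intro; apply H; apply in_or_app; auto.
  - apply andb_prop in Hq as [H1 H2]. rewrite IHM1, IHM2; auto; intro; apply H; apply in_or_app; auto.
  - apply andb_prop in Hq as [H1 H2]. rewrite (IHM2 x); auto using orb_true_r. intro; apply H; apply in_or_app; auto.
Qed.

Lemma fv_quant : forall pre (M : form nat) x, In x (fv M) -> In x (map snd pre) \/ In x (fv (quant pre M)).
Proof.
  induction pre as [|[q y] pre IH]; simpl; auto. intros M x H.
  destruct (IH M x H) as [H1|H1]; [left; right; auto|].
  destruct (Nat.eqb_spec y x) as [E|E]; [left; left; auto|]. right.
  destruct q; simpl; apply filter_In; split; auto; apply Nat.eqb_neq in E; rewrite E; reflexivity.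
Qed.

Lemma all_sp pre M : fv (quant pre M) = [] -> qfree M = true ->
  (forall q x, In (q,x) pre -> sp_covered x M = true) -> forall x, sp_covered x M = true.
Proof.
  intros Hs Hq Hsp x. destruct (in_dec Nat.eq_dec x (fv M)) as [i|n].
  - destruct (fv_quant pre M x i) as [Hin|Hin].
    + apply in_map_iff in Hin as [[q y] [Heq Hin]]; simpl in Heq; subst; eauto.
    + rewrite Hs in Hin; destruct Hin.
  - apply sp_nofv; auto.
Qed.

Definition senv {D} (c : nat -> D) (s : list (nat * nat)) (v : nat -> D) : nat -> D :=
  fun y => match find (fun p => Nat.eqb y (fst p)) s with Some (_, k) => c k | None => v y end.

Lemma senv_nil {D} (c : nat -> D) v : senv c [] v = v.
Proof. reflexivity. Qed.

Lemma senv_cons {D} (c : nat -> D) s x k v : senv c ((x,k)::s) v = upd (senv c s v) x (c k).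
Proof.
  apply functional_extensionality; intro y; unfold senv, upd; simpl.
  rewrite Nat.eqb_sym. destruct (Nat.eqb x y); reflexivity.
Qed.

Lemma eval_subst {D} (c : nat -> D) s v t : eval_term c v (subst_term s t) = eval_term c (senv c s v) t.
Proof. destruct t; simpl; unfold senv; auto. destruct (find _ s) as [[? ?]|]; reflexivity. Qed.

Lemma map_eval_subst {D} (c : nat -> D) s v l :
  map (eval_term c v) (map (subst_term s) l) = map (eval_term c (senv c s v)) l.
Proof. rewrite map_map. apply map_ext. intro; apply eval_subst. Qed.

Lemma subst_sem {D} (c : nat -> D) (r : nat -> list D -> Prop) s : forall M v, qfree M = true ->
  sat c r v (subst s M) <-> sat c r (senv c s v) M.
Proof.
  induction M; intros v Hq; simpl in *; try discriminate.
  - tauto.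
  - rewrite map_eval_subst; tauto.
  - rewrite !eval_subst; tauto.
  - apply andb_prop in Hq as [H1 H2]; rewrite IHM1, IHM2; auto; tauto.
  - apply andb_prop in Hq as [H1 H2]; rewrite IHM1, IHM2; auto; tauto.
  - apply andb_prop in Hq as [H1 H2]; rewrite IHM1, IHM2; auto; tauto.
Qed.

Lemma star_subst_sem {D} (c : nat -> D) (r : nat + nat -> list D -> Prop) s : forall M v, qfree M = true ->
  sat c r v (star (subst s M)) <-> sat c r (senv c s v) (star M).
Proof.
  induction M; intros v Hq; simpl in *; try discriminate.
  - tauto.
  - rewrite map_eval_subst; tauto.
  - rewrite !eval_subst; tauto.
  - apply andb_prop in Hq as [H1 H2]; rewrite IHM1, IHM2; auto; tauto.
  - apply andb_prop in Hq as [H1 H2]; rewrite IHM1, IHM2; auto; tauto.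
  - apply andb_prop in Hq as [H1 H2]; rewrite IHM1, IHM2, !sat_map_preds by auto.
    rewrite !(subst_sem c (fun p => r (inl p))) by auto. tauto.
Qed.

Lemma bigAnd_cons G G' l : bigAnd (G :: G' :: l) = FAnd G (bigAnd (G' :: l)).
Proof. reflexivity. Qed.
Lemma bigOr_cons G G' l : bigOr (G :: G' :: l) = FOr G (bigOr (G' :: l)).
Proof. reflexivity. Qed.

Lemma sat_bigAnd {P D} (c : nat -> D) (r : P -> list D -> Prop) (f : form nat -> form P) v :
  (forall G H, f (FAnd G H) = FAnd (f G) (f H)) -> (sat c r v (f FTop)) ->
  forall l, sat c r v (f (bigAnd l)) <-> (forall G, In G l -> sat c r v (f G)).
Proof.
  intros Hf Ht l; induction l as [|G l IH].
  - simpl. split; auto. intros _ G [].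
  - destruct l as [|G' l'].
    + simpl. split; [intros H G0 [E|[]]; subst; auto | intros H; apply H; auto].
    + rewrite bigAnd_cons, Hf. simpl. rewrite IH. split.
      * intros [H1 H2] G0 [E|E]; subst; auto.
      * intros H; split; auto.
Qed.

Lemma sat_bigOr {P D} (c : nat -> D) (r : P -> list D -> Prop) (f : form nat -> form P) v :
  (forall G H, f (FOr G H) = FOr (f G) (f H)) -> (~ sat c r v (f FBot)) ->
  forall l, sat c r v (f (bigOr l)) <-> (exists G, In G l /\ sat c r v (f G)).
Proof.
  intros Hf Ht l; induction l as [|G l IH].
  - simpl. split; [tauto|]. intros [G [[] _]].
  - destruct l as [|G' l'].
    + simpl. split; [intros H; exists G; auto | intros [G0 [[E|[]] H]]; subst; auto].
    + rewrite bigOr_cons, Hf. simpl. rewrite IH. split.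
      * intros [H1|[G0 [H2 H3]]]; eauto.
      * intros [G0 [[E|E] H]]; subst; eauto.
Qed.

Lemma ground_gen {P D} (c : nat -> D) cs (r : P -> list D -> Prop) (f : form nat -> form P) M :
  qfree M = true ->
  (forall G H, f (FAnd G H) = FAnd (f G) (f H)) -> (forall G H, f (FOr G H) = FOr (f G) (f H)) ->
  (forall v, sat c r v (f FTop)) -> (forall v, ~ sat c r v (f FBot)) ->
  (forall s v, sat c r v (f (subst s M)) <-> sat c r (senv c s v) (f M)) ->
  forall pre s v, sat c r v (f (ground_aux cs s (quant pre M))) <->
    semq (InH c cs) pre (fun w => sat c r w (f M)) (senv c s v).
Proof.
  intros Hq HA HO HT HB HS pre. induction pre as [|[[|] x] pre IH]; intros s v.
  - assert (E : ground_aux cs s M = subst s M) by (destruct M; simpl in Hq; try discriminate; reflexivity).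
    simpl quant. rewrite E. apply HS.
  - simpl. rewrite (sat_bigAnd c r f v HA (HT v)). split.
    + intros H d [k [Hk Hck]]; subst d. rewrite <- senv_cons. apply IH. apply H.
      apply in_map_iff. exists k; auto.
    + intros H G HG. apply in_map_iff in HG as [k [HG Hk]]. subst G. apply IH. rewrite senv_cons.
      apply H. exists k; auto.
  - simpl. rewrite (sat_bigOr c r f v HO (HB v)). split.
    + intros [G [HG H]]. apply in_map_iff in HG as [k [HG Hk]]. subst G. apply IH in H.
      rewrite senv_cons in H. exists (c k). split; auto. exists k; auto.
    + intros [d [[k [Hk Hck]] H]]; subst d. exists (ground_aux cs ((x,k)::s) (quant pre M)).
      split; [apply in_map_iff; exists k; auto|]. apply IH. rewrite senv_cons. auto.
Qed.

Lemma ground_sem {D} (c : nat -> D) cs (r : nat -> list D -> Prop) pre M : qfree M = true ->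
  forall v, sat c r v (Ground cs (quant pre M)) <-> semq (InH c cs) pre (fun w => sat c r w M) v.
Proof.
  intros Hq v. unfold Ground. rewrite <- (senv_nil c v) at 2.
  apply (ground_gen c cs r (fun G => G) M Hq); auto.
  - intros v0; simpl; auto.
  - intros; apply subst_sem; auto.
Qed.

Lemma star_quant (pre : list (bool*nat)) M : star (quant pre M) = quant pre (star M).
Proof. induction pre as [|[[|] x] pre IH]; simpl; auto; rewrite IH; auto. Qed.

Lemma ground_star_sem {D} (c : nat -> D) cs (r : nat + nat -> list D -> Prop) pre M : qfree M = true ->
  forall v, sat c r v (star (Ground cs (quant pre M))) <-> semq (InH c cs) pre (fun w => sat c r w (star M)) v.
Proof.
  intros Hq v. unfold Ground. rewrite <- (senv_nil c v) at 2.
  apply (ground_gen c cs r star M Hq); auto.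
  - intros v0; simpl; auto.
  - intros; apply star_subst_sem; auto.
Qed.

Lemma preds_subst : forall F s, preds (subst s F) = preds F.
Proof. induction F; intros s; simpl; rewrite ?length_map, ?IHF1, ?IHF2, ?IHF; auto. Qed.

Lemma preds_quant (pre : list (bool*nat)) (M : form nat) : preds (quant pre M) = preds M.
Proof. induction pre as [|[[|] x] pre IH]; simpl; auto. Qed.

Lemma consts_quant (pre : list (bool*nat)) (M : form nat) : consts (quant pre M) = consts M.
Proof. induction pre as [|[[|] x] pre IH]; simpl; auto. Qed.

Lemma fv_quant_eq (pre : list (bool*nat)) (M : form nat) : fv (quant pre M) = fv (quant pre M).
Proof. reflexivity. Qed.

Lemma preds_bigAnd a : forall l, In a (preds (bigAnd l)) <-> exists G, In G l /\ In a (preds G).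
Proof.
  induction l as [|G l IH].
  - simpl. split; [tauto|]. intros [G [[] _]].
  - destruct l as [|G' l'].
    + simpl. split; [intros H; exists G; auto | intros [G0 [[E|[]] H]]; subst; auto].
    + rewrite bigAnd_cons. simpl. rewrite in_app_iff, IH. split.
      * intros [H1|[G0 [H2 H3]]]; eauto.
      * intros [G0 [[E|E] H]]; subst; eauto.
Qed.

Lemma preds_bigOr a : forall l, In a (preds (bigOr l)) <-> exists G, In G l /\ In a (preds G).
Proof.
  induction l as [|G l IH].
  - simpl. split; [tauto|]. intros [G [[] _]].
  - destruct l as [|G' l'].
    + simpl. split; [intros H; exists G; auto | intros [G0 [[E|[]] H]]; subst; auto].
    + rewrite bigOr_cons. simpl. rewrite in_app_iff, IH. split.
      * intros [H1|[G0 [H2 H3]]]; eauto.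
      * intros [G0 [[E|E] H]]; subst; eauto.
Qed.

Lemma preds_ground cs M : cs <> [] -> qfree M = true ->
  forall pre s a, In a (preds (ground_aux cs s (quant pre M))) <-> In a (preds M).
Proof.
  intros Hcs Hq pre. destruct cs as [|k0 cs']; [congruence|].
  induction pre as [|[[|] x] pre IH]; intros s a.
  - assert (E : ground_aux (k0::cs') s M = subst s M) by (destruct M; simpl in Hq; try discriminate; reflexivity).
    simpl quant. rewrite E, preds_subst. tauto.
  - cbn [quant ground_aux]. rewrite preds_bigAnd. split.
    + intros [G [HG Ha]]. apply in_map_iff in HG as [k [HG Hk]]. subst G. apply IH in Ha; auto.
    + intros Ha. exists (ground_aux (k0::cs') ((x,k0)::s) (quant pre M)). split; [simpl; auto|]. apply IH; auto.
  - cbn [quant ground_aux]. rewrite preds_bigOr. split.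
    + intros [G [HG Ha]]. apply in_map_iff in HG as [k [HG Hk]]. subst G. apply IH in Ha; auto.
    + intros Ha. exists (ground_aux (k0::cs') ((x,k0)::s) (quant pre M)). split; [simpl; auto|]. apply IH; auto.
Qed.

Lemma K1 {D} (c : nat -> D) cs pre M : (exists d0, InH c cs d0) -> NoDup (map snd pre) ->
  qfree M = true -> incl (consts M) cs ->
  (forall q x, In (q,x) pre -> occ_safe q x true false M = true) ->
  forall R U, Bnd c cs R -> (forall p l, U p l -> R p l) -> forall v,
  (sat c R v (quant pre M) <-> sat c R v (Ground cs (quant pre M))) /\
  (sat c (with_vars R U) v (star (quant pre M)) <-> sat c (with_vars R U) v (star (Ground cs (quant pre M)))).
Proof.
  intros Hd0 ND Hq Hc Ho R U HB HUR v.
  assert (HBU : Bnd c cs U) by (intros p l H; apply (HB p l), HUR, H).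
  split.
  - rewrite sat_quant, ground_sem by auto. apply semq_rel; auto.
    intros q x Hin w d d' Hnd.
    pose proof (mono_cl c cs R q x HB M true Hq Hc (Ho q x Hin) (upd w x d) (upd w x d')) as Hm.
    rewrite upd_same in Hm. specialize (Hm Hnd).
    assert (Hag : forall y, y <> x -> upd w x d y = upd w x d' y)
      by (intros; rewrite !upd_other by congruence; auto).
    specialize (Hm Hag). destruct q; exact Hm.
  - rewrite star_quant, sat_quant, ground_star_sem by auto. apply semq_rel; auto.
    intros q x Hin w d d' Hnd.
    pose proof (mono_star c cs R U q x HB HBU HUR M true Hq Hc (Ho q x Hin) (upd w x d) (upd w x d')) as Hm.
    rewrite upd_same in Hm. specialize (Hm Hnd).
    assert (Hag : forall y, y <> x -> upd w x d y = upd w x d' y)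
      by (intros; rewrite !upd_other by congruence; auto).
    specialize (Hm Hag). destruct q; exact Hm.
Qed.

Lemma bounded_from {D} (I : interp D) cs (X M : form nat) (dom : D -> Prop) pre :
  qfree M = true -> incl (consts M) cs -> (forall x, sp_covered x M = true) ->
  (forall a, In a (preds X) <-> In a (preds M)) ->
  (forall v, sat (ic I) (ip I) v X <-> semq dom pre (fun w => sat (ic I) (ip I) w M) v) ->
  (forall U v, sat (ic I) (with_vars (ip I) U) v (star X) <->
     semq dom pre (fun w => sat (ic I) (with_vars (ip I) U) w (star M)) v) ->
  models_SM I X -> forall p l, In (p, length l) (preds M) -> ip I p l -> Forall (InH (ic I) cs) l.
Proof.
  intros Hq Hc Hsp HP HX HXs [Hm Hmin] p l Hin HR.
  destruct (classic (Forall (InH (ic I) cs) l)) as [H|H]; auto. exfalso. apply Hmin.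
  exists (fun p l => ip I p l /\ Forall (InH (ic I) cs) l). split.
  - split.
    + intros p' n _ l' _ [H1 _]; auto.
    + intro Heq. apply H. apply (Heq p (length l)); [apply HP; auto| reflexivity| auto].
  - intro v. apply HXs.
    apply (proj2 (semq_ext dom pre _ _
       (fun w => sp_claim (ic I) cs (ip I) _ (fun p l => iff_refl _) M w Hq Hc (fun x _ => Hsp x)) v)).
    apply HX. apply Hm.
Qed.

Lemma transfer {D} (I : interp D) (X Y : form nat) (P : list (nat*nat)) (B : D -> Prop) :
  (forall a, In a (preds X) <-> In a P) -> (forall a, In a (preds Y) <-> In a P) ->
  (models_SM I X -> forall p l, In (p, length l) P -> ip I p l -> Forall B l) ->
  (forall R U, (forall p l, R p l -> Forall B l) -> (forall p l, U p l -> R p l) ->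
     forall v, (sat (ic I) R v X <-> sat (ic I) R v Y) /\
               (sat (ic I) (with_vars R U) v (star X) <-> sat (ic I) (with_vars R U) v (star Y))) ->
  models_SM I X -> models_SM I Y.
Proof.
  intros HX HY Hb HK HSM. pose proof (Hb HSM) as Hbd. destruct HSM as [Hm Hmin].
  set (R' := fun p l => In (p, length l) P /\ ip I p l).
  assert (HB' : forall p l, R' p l -> Forall B l) by (intros p l [H1 H2]; exact (Hbd p l H1 H2)).
  split.
  - intro v. apply (proj1 (ext_cl (ic I) Y R' (ip I) ltac:(intros p l Hp; unfold R'; apply HY in Hp; tauto) v)).
    apply (proj1 (proj1 (HK R' R' HB' (fun _ _ h => h) v))).
    apply (proj1 (ext_cl (ic I) X (ip I) R' ltac:(intros p l Hp; unfold R'; apply HX in Hp; tauto) v)).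
    apply Hm.
  - intros [U [Hlt Hst]]. apply Hmin. set (U' := fun p l => In (p, length l) P /\ U p l).
    exists U. destruct Hlt as [Hle Hne]. split.
    + split.
      * intros p n Hp l Hl Hu. apply (Hle p n); auto. apply HY, HX; auto.
      * intro Heq; apply Hne; intros p n Hp l Hl; apply (Heq p n); auto; apply HX, HY; auto.
    + intro v.
      assert (HU'R' : forall p l, U' p l -> R' p l).
      { intros p l [Hp Hu]; split; auto. apply (Hle p (length l)); auto. apply HY; auto. }
      apply (proj2 (ext_star (ic I) X (ip I) U R' U'
        ltac:(intros p l Hp; unfold R', U'; apply HX in Hp; tauto) v)).
      apply (proj2 (proj2 (HK R' U' HB' HU'R' v))).
      apply (proj1 (ext_star (ic I) Y (ip I) U R' U'
        ltac:(intros p l Hp; unfold R', U'; apply HY in Hp; tauto) v)).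
      apply Hst.
Qed.

Theorem proposition3 :
  forall (F : form nat) (cs : list nat),
    safe F ->
    cs <> nil -> NoDup cs ->
    (forall c, In c (consts F) -> In c cs) ->
    forall (D : Type) (I : interp D), inhabited D ->
      (models_SM I (Ground cs F) <-> models_SM I F).
Proof.
  intros F cs Hsafe Hcs ND Hcst D I Hinh.
  destruct Hsafe as [Hss Hsafe]. unfold semi_safe in Hss.
  destruct (prefix_matrix F) as [pre M] eqn:EP.
  destruct Hss as [Hsent [Hqf [HND Hsp]]].
  apply prefix_quant in EP. subst F.
  assert (HcM : incl (consts M) cs) by (intros k Hk; apply Hcst; rewrite consts_quant; auto).
  assert (Hall : forall x, sp_covered x M = true) by (apply (all_sp pre M); auto).
  assert (Hd0 : exists d0, InH (ic I) cs d0)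
    by (destruct cs as [|k cs']; [congruence| exists (ic I k); exists k; simpl; auto]).
  assert (HPG : forall a, In a (preds (Ground cs (quant pre M))) <-> In a (preds M))
    by (intro a; unfold Ground; apply preds_ground; auto).
  assert (HPF : forall a, In a (preds (quant pre M)) <-> In a (preds M))
    by (intro a; rewrite preds_quant; tauto).
  pose proof (K1 (ic I) cs pre M Hd0 HND Hqf HcM Hsafe) as HK.
  assert (BF : models_SM I (quant pre M) -> forall p l, In (p, length l) (preds M) -> ip I p l ->
                 Forall (InH (ic I) cs) l).
  { apply (bounded_from I cs (quant pre M) M (fun _ => True) pre); auto.
    - intro v; apply sat_quant.
    - intros U v; rewrite star_quant; apply sat_quant. }
  assert (BG : models_SM I (Ground cs (quant pre M)) -> forall p l, In (p, length l) (preds M) -> ip I p l ->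
                 Forall (InH (ic I) cs) l).
  { apply (bounded_from I cs _ M (InH (ic I) cs) pre); auto.
    - intro v; apply ground_sem; auto.
    - intros U v; apply ground_star_sem; auto. }
  split.
  - apply (transfer I _ _ (preds M) (InH (ic I) cs)); auto.
    intros R U HB HUR v. destruct (HK R U HB HUR v); split; symmetry; auto.
  - apply (transfer I _ _ (preds M) (InH (ic I) cs)); auto.
Qed.
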